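(* Let $Z$ be a real Banach space and $f:Z\to\mathbb{R}$ a continuous convex function. Then there exists a unique closed linear subspace $Y_f$ of $Z$ such that, for the quotient space $X_f:=Z/Y_f$ and the natural projection $\pi:Z\to X_f$, the function $f$ can be written as $$f(z)=c(\pi(z))+\ell(z)\quad\text{for all } z\in Z,$$ where $\ell\in Z^*$ and $c:X_f\to[a,\infty)$ is a convex function which is not constant on any line (i.e. there are no $\hat x,\hat v\in X_f$ with $\hat v\neq 0$ and $t\mapsto c(\hat x+t\hat v)$ constant on $\mathbb{R}$), with $a\in c(X_f)$. Moreover, $$Y_f=\{v\in Z: f(z_0+tv)-f(z_0)-\langle \xi_0,tv\rangle=0 \text{ for all } t\in\mathbb{R}\},$$ where $z_0$ is any point of $Z$ and $\xi_0$ is any element of $\partial f(z_0)$.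
   Context: For a continuous convex $f$ on a Banach space $Z$ with dual $Z^*$ and duality pairing $\langle\cdot,\cdot\rangle$, $\partial f(x)=\{\xi\in Z^*: f(y)\ge f(x)+\langle\xi,y-x\rangle \text{ for all } y\in Z\}$ (nonempty for every $x$). $Z/Y_f$ carries the quotient norm. *)

(* Defs.v *)
From Stdlib Require Import Reals.
Open Scope R_scope.

Record NormedSpace := {
  carrier :> Type;
  vzero : carrier;
  vadd : carrier -> carrier -> carrier;
  vopp : carrier -> carrier;
  vscal : R -> carrier -> carrier;
  vnorm : carrier -> R;
  vadd_assoc : forall x y z, vadd x (vadd y z) = vadd (vadd x y) z;
  vadd_comm : forall x y, vadd x y = vadd y x;
  vadd_0 : forall x, vadd x vzero = x;
  vadd_opp : forall x, vadd x (vopp x) = vzero;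
  vscal_1 : forall x, vscal 1 x = x;
  vscal_assoc : forall a b x, vscal a (vscal b x) = vscal (a * b) x;
  vscal_distr_v : forall a x y, vscal a (vadd x y) = vadd (vscal a x) (vscal a y);
  vscal_distr_s : forall a b x, vscal (a + b) x = vadd (vscal a x) (vscal b x);
  vnorm_eq0 : forall x, vnorm x = 0 -> x = vzero;
  vnorm_scal : forall a x, vnorm (vscal a x) = Rabs a * vnorm x;
  vnorm_triangle : forall x y, vnorm (vadd x y) <= vnorm x + vnorm y
}.

Arguments vzero {_}.
Arguments vadd {_} _ _.
Arguments vopp {_} _.
Arguments vscal {_} _ _.
Arguments vnorm {_} _.

Definition vsub {Z : NormedSpace} (x y : Z) : Z := vadd x (vopp y).

Definition cauchy_seq {Z : NormedSpace} (u : nat -> Z) : Prop :=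
  forall eps, 0 < eps -> exists N, forall m n, (N <= m)%nat -> (N <= n)%nat ->
    vnorm (vsub (u m) (u n)) < eps.

Definition seq_lim {Z : NormedSpace} (u : nat -> Z) (l : Z) : Prop :=
  forall eps, 0 < eps -> exists N, forall n, (N <= n)%nat -> vnorm (vsub (u n) l) < eps.

Definition complete (Z : NormedSpace) : Prop :=
  forall u : nat -> Z, cauchy_seq u -> exists l, seq_lim u l.

Definition continuous_fun {Z : NormedSpace} (f : Z -> R) : Prop :=
  forall z eps, 0 < eps -> exists delta, 0 < delta /\
    forall w, vnorm (vsub w z) < delta -> Rabs (f w - f z) < eps.

Definition convex_fun {Z : NormedSpace} (f : Z -> R) : Prop :=
  forall x y (lam : R), 0 <= lam <= 1 ->
    f (vadd (vscal lam x) (vscal (1 - lam) y)) <= lam * f x + (1 - lam) * f y.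

Definition in_dual {Z : NormedSpace} (xi : Z -> R) : Prop :=
  (forall x y, xi (vadd x y) = xi x + xi y) /\
  (forall a x, xi (vscal a x) = a * xi x) /\
  (exists M, forall x, Rabs (xi x) <= M * vnorm x).

Definition subdiff {Z : NormedSpace} (f : Z -> R) (x : Z) (xi : Z -> R) : Prop :=
  in_dual xi /\ forall y, f y >= f x + xi (vsub y x).

Definition closed_subspace {Z : NormedSpace} (Y : Z -> Prop) : Prop :=
  Y vzero /\
  (forall x y, Y x -> Y y -> Y (vadd x y)) /\
  (forall a x, Y x -> Y (vscal a x)) /\
  (forall (u : nat -> Z) l, (forall n, Y (u n)) -> seq_lim u l -> Y l).

(* A function c on the
   quotient X = Z/Y is represented by the Y-invariant function g = c o pi
   on Z; this is a bijective correspondence.  Under it: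
   - c convex            <-> g convex;
   - c(x^ + t v^) with v^ <> 0  <-> g(x + t v) with v not in Y;
   - c(X) = g(Z). *)
Definition decomposes {Z : NormedSpace} (f : Z -> R) (Y : Z -> Prop) : Prop :=
  exists (l : Z -> R) (g : Z -> R),
    in_dual l /\
    (forall z y, Y y -> g (vadd z y) = g z) /\
    convex_fun g /\
    (forall x v, ~ Y v -> ~ (exists k, forall t : R, g (vadd x (vscal t v)) = k)) /\
    (exists a, (forall z, a <= g z) /\ (exists z, g z = a)) /\
    (forall z, f z = g z + l z).

(* Main.v *)
Require Import Defs.
From Stdlib Require Import Reals.
Open Scope R_scope.
From Stdlib Require Import Lra Classical ClassicalEpsilon FunctionalExtensionality PropExtensionality.
From mathcomp Require classical_sets.

Section Vec.
Variable Z : NormedSpace.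

Lemma vadd_0l (x : Z) : vadd vzero x = x.
Proof. rewrite vadd_comm; apply vadd_0. Qed.

Lemma vadd_cancel (x y z : Z) : vadd x y = vadd x z -> y = z.
Proof.
  intro H. assert (E : vadd (vopp x) (vadd x y) = vadd (vopp x) (vadd x z)) by (rewrite H; reflexivity).
  rewrite !vadd_assoc in E. rewrite (vadd_comm Z (vopp x) x), vadd_opp, !vadd_0l in E. exact E.
Qed.

Lemma vscal_0 (x : Z) : vscal 0 x = vzero.
Proof.
  apply (vadd_cancel (vscal 0 x)). rewrite vadd_0, <- vscal_distr_s. f_equal. ring.
Qed.

Lemma vscal_a0 (a : R) : vscal a (@vzero Z) = vzero.
Proof.
  apply (vadd_cancel (vscal a vzero)). rewrite vadd_0, <- vscal_distr_v, vadd_0. reflexivity.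
Qed.

Lemma vopp_scal (x : Z) : vopp x = vscal (-1) x.
Proof.
  apply (vadd_cancel x). rewrite vadd_opp. rewrite <- (vscal_1 _ x) at 1.
  rewrite <- vscal_distr_s. replace (1 + -1) with 0 by ring. rewrite vscal_0. reflexivity.
Qed.

Lemma vnorm_0 : vnorm (@vzero Z) = 0.
Proof. rewrite <- (vscal_0 vzero), vnorm_scal, Rabs_R0. ring. Qed.

Lemma vnorm_nonneg (x : Z) : 0 <= vnorm x.
Proof.
  assert (H := vnorm_triangle _ x (vopp x)). rewrite vadd_opp, vnorm_0, vopp_scal, vnorm_scal in H.
  replace (Rabs (-1)) with 1 in H by (rewrite Rabs_left; lra). lra.
Qed.

Variables a0 a1 a2 a3 : Z.
Definition lc4 c0 c1 c2 c3 := vadd (vscal c0 a0) (vadd (vscal c1 a1) (vadd (vscal c2 a2) (vscal c3 a3))).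

Lemma swap4 (p q r s : Z) : vadd (vadd p q) (vadd r s) = vadd (vadd p r) (vadd q s).
Proof.
  rewrite <- !vadd_assoc. f_equal. rewrite !vadd_assoc. f_equal. apply vadd_comm.
Qed.

Lemma lc4_add c0 c1 c2 c3 d0 d1 d2 d3 :
  vadd (lc4 c0 c1 c2 c3) (lc4 d0 d1 d2 d3) = lc4 (c0+d0) (c1+d1) (c2+d2) (c3+d3).
Proof.
  unfold lc4. rewrite !vscal_distr_s. rewrite swap4. f_equal. rewrite swap4. f_equal.
  apply swap4.
Qed.

Lemma lc4_scal r c0 c1 c2 c3 :
  vscal r (lc4 c0 c1 c2 c3) = lc4 (r*c0) (r*c1) (r*c2) (r*c3).
Proof. unfold lc4. rewrite !vscal_distr_v, !vscal_assoc. reflexivity. Qed.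

Lemma lc4_zero : vzero = lc4 0 0 0 0.
Proof. unfold lc4. rewrite !vscal_0, !vadd_0. reflexivity. Qed.

Inductive vexp := VA0 | VA1 | VA2 | VA3 | VZ | VAdd (a b : vexp) | VOpp (a : vexp) | VScal (r : R) (a : vexp).

Fixpoint vint e : Z := match e with
 | VA0 => a0 | VA1 => a1 | VA2 => a2 | VA3 => a3 | VZ => vzero
 | VAdd a b => vadd (vint a) (vint b) | VOpp a => vopp (vint a) | VScal r a => vscal r (vint a) end.

Fixpoint co (k : nat) e : R := match e with
 | VA0 => match k with 0%nat => 1 | _ => 0 end
 | VA1 => match k with 1%nat => 1 | _ => 0 end
 | VA2 => match k with 2%nat => 1 | _ => 0 end
 | VA3 => match k with 3%nat => 1 | _ => 0 end
 | VZ => 0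
 | VAdd a b => co k a + co k b | VOpp a => - co k a | VScal r a => r * co k a end.

Lemma vint_nf e : vint e = lc4 (co 0 e) (co 1 e) (co 2 e) (co 3 e).
Proof.
  induction e; simpl.
  - unfold lc4; rewrite vscal_1, !vscal_0, !vadd_0. reflexivity.
  - unfold lc4; rewrite vscal_1, !vscal_0, !vadd_0, vadd_0l. reflexivity.
  - unfold lc4; rewrite vscal_1, !vscal_0, !vadd_0, !vadd_0l. reflexivity.
  - unfold lc4; rewrite vscal_1, !vscal_0, !vadd_0l. reflexivity.
  - apply lc4_zero.
  - rewrite IHe1, IHe2, lc4_add. reflexivity.
  - rewrite IHe, vopp_scal, lc4_scal. f_equal; ring.
  - rewrite IHe, lc4_scal. reflexivity.
Qed.

Lemma vexp_eq e1 e2 : co 0 e1 = co 0 e2 -> co 1 e1 = co 1 e2 -> co 2 e1 = co 2 e2 ->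
  co 3 e1 = co 3 e2 -> vint e1 = vint e2.
Proof. intros H0 H1 H2 H3. rewrite !vint_nf, H0, H1, H2, H3. reflexivity. Qed.
End Vec.

Ltac reify x0 x1 x2 x3 t :=
  lazymatch t with
  | vzero => constr:(VZ)
  | x0 => constr:(VA0) | x1 => constr:(VA1) | x2 => constr:(VA2) | x3 => constr:(VA3)
  | vadd ?a ?b => let ra := reify x0 x1 x2 x3 a in let rb := reify x0 x1 x2 x3 b in constr:(VAdd ra rb)
  | vsub ?a ?b => let ra := reify x0 x1 x2 x3 a in let rb := reify x0 x1 x2 x3 b in constr:(VAdd ra (VOpp rb))
  | vopp ?a => let ra := reify x0 x1 x2 x3 a in constr:(VOpp ra)
  | vscal ?r ?a => let ra := reify x0 x1 x2 x3 a in constr:(VScal r ra)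
  end.

Ltac veq x0 x1 x2 x3 :=
  match goal with |- ?L = ?R =>
    let l := reify x0 x1 x2 x3 L in let r := reify x0 x1 x2 x3 R in
    change (vint _ x0 x1 x2 x3 l = vint _ x0 x1 x2 x3 r);
    apply vexp_eq; simpl; try (field; lra); try ring end.


Lemma zorn_sets (T:Type) (P : (T->Prop)->Prop) :
  (forall F : (T -> Prop) -> Prop, (forall X, F X -> P X) ->
     (forall X Y, F X -> F Y -> (forall t, X t -> Y t) \/ (forall t, Y t -> X t)) ->
     P (fun a => exists X, F X /\ X a)) ->
  exists A, P A /\ forall B, (forall t, A t -> B t) -> ~(forall t, B t -> A t) -> ~ P B.
Proof.
  intro H. destruct (@classical_sets.Zorn_bigcup T P) as [A [PA HA]].
  - intros F HF Ht. 
    assert (E : classical_sets.bigcup F (fun X => X) = (fun a => exists X, F X /\ X a)).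
    { apply functional_extensionality; intro a. apply propositional_extensionality. split.
      + intros [X FX Xa]. exists X. split; assumption.
      + intros [X [FX Xa]]. exists X; assumption. }
    rewrite E. apply H; [exact HF | exact Ht].
  - exists A. split; [exact PA|]. intros B H1 H2. apply HA. split; assumption.
Qed.


Lemma div_le_cross X Y s t : 0 < s -> 0 < t -> t * X <= s * Y -> X / s <= Y / t.
Proof.
  intros Hs Ht H. apply (Rmult_le_reg_r (s*t)); [nra|].
  replace (X / s * (s * t)) with (t * X) by (field; lra).
  replace (Y / t * (s * t)) with (s * Y) by (field; lra). exact H.
Qed.

Section Subgrad.
Variable Z : NormedSpace.
Variable f : Z -> R.
Hypothesis Hcont : continuous_fun f.
Hypothesis Hconv : convex_fun f.
Variable z0 : Z.

Definition hh (v : Z) := f (vadd z0 v) - f z0.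

Lemma hh_conv a b lam : 0 <= lam <= 1 ->
  hh (vadd (vscal lam a) (vscal (1-lam) b)) <= lam * hh a + (1-lam) * hh b.
Proof.
  intros Hl. unfold hh.
  replace (vadd z0 (vadd (vscal lam a) (vscal (1 - lam) b))) with
    (vadd (vscal lam (vadd z0 a)) (vscal (1-lam) (vadd z0 b))) by (veq z0 a b z0).
  pose proof (Hconv (vadd z0 a) (vadd z0 b) lam Hl). lra.
Qed.

Lemma hh0 : hh vzero = 0.
Proof. unfold hh. rewrite vadd_0. ring. Qed.

Definition goodG (G : Z * R -> Prop) :=
  (forall x a y b, G (x,a) -> G (y,b) -> G (vadd x y, a+b)) /\
  (forall r x a, G (x,a) -> G (vscal r x, r*a)) /\
  (forall x a b, G (x,a) -> G (x,b) -> a = b) /\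
  (forall x a, G (x,a) -> a <= hh x).

Lemma goodG_chain : forall F : (Z * R -> Prop) -> Prop, (forall X, F X -> goodG X) ->
     (forall X Y, F X -> F Y -> (forall t, X t -> Y t) \/ (forall t, Y t -> X t)) ->
     goodG (fun a => exists X, F X /\ X a).
Proof.
  intros F HF Ht. split; [|split; [|split]].
  - intros x a y b [X [FX HX]] [Y [FY HY]]. destruct (Ht X Y FX FY) as [S|S].
    + exists Y. split; [exact FY|]. apply (proj1 (HF Y FY)); auto.
    + exists X. split; [exact FX|]. apply (proj1 (HF X FX)); auto.
  - intros r x a [X [FX HX]]. exists X. split; [exact FX|]. apply (proj1 (proj2 (HF X FX))); auto.
  - intros x a b [X [FX HX]] [Y [FY HY]]. destruct (Ht X Y FX FY) as [S|S].
    + apply (proj1 (proj2 (proj2 (HF Y FY))) x); auto.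
    + apply (proj1 (proj2 (proj2 (HF X FX))) x); auto.
  - intros x a [X [FX HX]]. apply (proj2 (proj2 (proj2 (HF X FX))) x); auto.
Qed.

Section Max.
Variable A : Z * R -> Prop.
Hypothesis gA : goodG A.
Hypothesis maxA : forall B, (forall t, A t -> B t) -> ~(forall t, B t -> A t) -> ~ goodG B.

Lemma A_add x a y b : A (x,a) -> A (y,b) -> A (vadd x y, a+b).
Proof. apply (proj1 gA). Qed.
Lemma A_scal r x a : A (x,a) -> A (vscal r x, r*a).
Proof. apply (proj1 (proj2 gA)). Qed.
Lemma A_fun x a b : A (x,a) -> A (x,b) -> a = b.
Proof. apply (proj1 (proj2 (proj2 gA))). Qed.
Lemma A_dom x a : A (x,a) -> a <= hh x.
Proof. apply (proj2 (proj2 (proj2 gA))). Qed.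

Lemma A_zero : A (vzero, 0).
Proof.
  destruct (classic (exists p, A p)) as [[[x a] Hp]|Hn].
  - pose proof (A_scal 0 x a Hp) as H. rewrite vscal_0, Rmult_0_l in H. exact H.
  - exfalso. apply (maxA (fun p => p = (vzero, 0))).
    + intros t Ht. exfalso. apply Hn. exists t. exact Ht.
    + intro H. apply Hn. exists (vzero, 0). apply H. reflexivity.
    + split; [|split; [|split]].
      * intros x a y b H1 H2. inversion H1; inversion H2; subst.
        rewrite vadd_0, Rplus_0_r. reflexivity.
      * intros r x a H1. inversion H1; subst. rewrite vscal_a0, Rmult_0_r. reflexivity.
      * intros x a b H1 H2. inversion H1; inversion H2; subst. reflexivity.
      * intros x a H1. inversion H1; subst. rewrite hh0. lra.
Qed.

Lemma key_ineq w x a y b s t : A (y,b) -> A (x,a) -> 0 < s -> 0 < t ->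
  (b - hh (vadd y (vscal (-s) w))) / s <= (hh (vadd x (vscal t w)) - a) / t.
Proof.
  intros Hy Hx Hs Ht. apply div_le_cross; auto.
  set (q := t + s).
  assert (Hq : 0 < q) by (unfold q; lra).
  assert (Hq' : q <> 0) by lra.
  assert (HA := A_scal (1/q) _ _ (A_add _ _ _ _ (A_scal t _ _ Hy) (A_scal s _ _ Hx))).
  apply A_dom in HA.
  replace (vscal (1 / q) (vadd (vscal t y) (vscal s x))) with
    (vadd (vscal (t/q) (vadd y (vscal (-s) w))) (vscal (1 - t/q) (vadd x (vscal t w)))) in HA
    by (unfold q in *; veq y x w w).
  assert (Hl : 0 <= t/q <= 1).
  { split. apply Rlt_le, Rdiv_lt_0_compat; lra.
    apply (Rmult_le_reg_r q); [lra|]. unfold Rdiv. rewrite Rmult_assoc, Rinv_l; unfold q in *; lra. }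
  pose proof (hh_conv (vadd y (vscal (-s) w)) (vadd x (vscal t w)) (t/q) Hl) as HC.
  set (H1 := hh (vadd y (vscal (-s) w))) in *.
  set (H2 := hh (vadd x (vscal t w))) in *.
  assert (E1 : q * (1 / q * (t * b + s * a)) = t*b + s*a) by (field; lra).
  assert (E2 : q * (t / q * H1 + (1 - t / q) * H2) = t * H1 + s * H2) by (unfold q; field; lra).
  assert (Hm : q * (1 / q * (t * b + s * a)) <= q * (t / q * H1 + (1 - t / q) * H2)).
  { apply Rmult_le_compat_l; lra. }
  lra.
Qed.
Lemma A_full w : exists a, A (w, a).
Proof.
  apply NNPP. intro Hw.
  set (L := fun r => exists y b s, A (y,b) /\ 0 < s /\ r = (b - hh (vadd y (vscal (-s) w))) / s).
  assert (HLb : bound L).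
  { exists ((hh (vadd vzero (vscal 1 w)) - 0) / 1). intros r [y [b [s [Hy [Hs ->]]]]].
    apply key_ineq; auto. apply A_zero. lra. }
  assert (HLn : exists r, L r).
  { exists ((0 - hh (vadd vzero (vscal (-1) w))) / 1). exists vzero, 0, 1.
    split; [apply A_zero|]. split; [lra|reflexivity]. }
  destruct (completeness L HLb HLn) as [c [Hub Hlub]].
  assert (Hup : forall x a t, A (x,a) -> 0 < t -> c <= (hh (vadd x (vscal t w)) - a) / t).
  { intros x a t Hx Ht. apply Hlub. intros r [y [b [s [Hy [Hs ->]]]]]. apply key_ineq; auto. }
  assert (Hlo : forall x a s, A (x,a) -> 0 < s -> (a - hh (vadd x (vscal (-s) w))) / s <= c).
  { intros x a s Hx Hs. apply Hub. exists x, a, s. auto. }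
  apply (maxA (fun p => exists x a t, A (x,a) /\ p = (vadd x (vscal t w), a + t*c))).
  - intros [x a] H. exists x, a, 0. split; [exact H|].
    rewrite vscal_0, vadd_0, Rmult_0_l, Rplus_0_r. reflexivity.
  - intro H. apply Hw. exists c. apply H. exists vzero, 0, 1. split; [apply A_zero|].
    rewrite vadd_0l, vscal_1. f_equal. ring.
  - split; [|split; [|split]].
    + intros x1 a1 y1 b1 [x [a [t [Hx E1]]]] [y [b [s [Hy E2]]]].
      inversion E1; inversion E2; subst.
      exists (vadd x y), (a + b), (t + s). split; [apply A_add; auto|].
      f_equal. veq x y w w. ring.
    + intros r x1 a1 [x [a [t [Hx E1]]]]. inversion E1; subst.
      exists (vscal r x), (r * a), (r * t). split; [apply A_scal; auto|].
      f_equal. veq x w w w. ring.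
    + intros x1 a1 b1 [x [a [t [Hx E1]]]] [y [b [s [Hy E2]]]].
      inversion E1; subst. inversion E2 as [[E3 E4]]. subst.
      destruct (Req_dec t s) as [Hts|Hts].
      * subst s. assert (Exy : x = y).
        { apply (vadd_cancel _ (vscal t w)). rewrite (vadd_comm _ _ x), (vadd_comm _ _ y). exact E3. }
        subst y. rewrite (A_fun x a b Hx Hy). reflexivity.
      * exfalso. apply Hw. exists (1 / (s - t) * (a + -1 * b)).
        assert (Hst : s - t <> 0) by lra.
        assert (Ew : vscal (1 / (s - t)) (vadd x (vscal (-1) y)) = w).
        { transitivity (vscal (1 / (s - t)) (vadd (vadd (vadd x (vscal t w)) (vscal (-1) (vadd y (vscal s w)))) (vscal (s - t) w))).
          - veq x y w w.
          - rewrite E3. veq y w w w. }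
        rewrite <- Ew at 1. apply A_scal. apply A_add; auto. apply A_scal; auto.
    + intros x1 a1 [x [a [t [Hx E1]]]]. inversion E1; subst.
      destruct (Rtotal_order t 0) as [Ht|[Ht|Ht]].
      * set (s := - t). assert (Hs : 0 < s) by (unfold s; lra).
        pose proof (Hlo x a s Hx Hs) as H. replace (- s) with t in H by (unfold s; ring).
        set (H0 := hh (vadd x (vscal t w))) in *.
        assert (H' : (a - H0) / s * s <= c * s) by (apply Rmult_le_compat_r; lra).
        replace ((a - H0) / s * s) with (a - H0) in H' by (field; lra).
        unfold s in H'. lra.
      * subst t. rewrite vscal_0, vadd_0, Rmult_0_l, Rplus_0_r. apply A_dom; auto.
      * pose proof (Hup x a t Hx Ht) as H.
        set (H0 := hh (vadd x (vscal t w))) in *.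
        assert (H' : c * t <= (H0 - a) / t * t) by (apply Rmult_le_compat_r; lra).
        replace ((H0 - a) / t * t) with (H0 - a) in H' by (field; lra).
        lra.
Qed.
End Max.
Lemma subgrad_exists : exists xi, subdiff f z0 xi.
Proof.
  destruct (zorn_sets (Z * R) goodG goodG_chain) as [A [gA maxA]].
  set (xi := fun w => proj1_sig (constructive_indefinite_description _ (A_full A gA maxA w))).
  assert (HA : forall w, A (w, xi w)).
  { intro w. unfold xi. destruct (constructive_indefinite_description _ _) as [a Ha]. exact Ha. }
  assert (Hlin1 : forall x y, xi (vadd x y) = xi x + xi y).
  { intros x y. apply (A_fun A gA _ _ _ (HA _)). apply A_add; auto. }
  assert (Hlin2 : forall r x, xi (vscal r x) = r * xi x).
  { intros r x. apply (A_fun A gA _ _ _ (HA _)). apply A_scal; auto. }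
  assert (Hdom : forall x, xi x <= hh x) by (intro x; apply (A_dom A gA), HA).
  exists xi. split; [split; [exact Hlin1|split; [exact Hlin2|]]|].
  - destruct (Hcont z0 1 Rlt_0_1) as [d [Hd Hc]].
    exists (2 / d). intro x.
    destruct (Rle_lt_or_eq_dec 0 (vnorm x) (vnorm_nonneg _ x)) as [Hn|Hn].
    + set (N := vnorm x) in *.
      set (r := d / (2 * N)).
      assert (Hr : 0 < r) by (unfold r; apply Rdiv_lt_0_compat; lra).
      assert (B : forall r', Rabs r' = r -> r' * xi x < 1).
      { intros r' Hr'. rewrite <- Hlin2. eapply Rle_lt_trans; [apply Hdom|].
        unfold hh. assert (Hc' := Hc (vadd z0 (vscal r' x))).
        replace (vsub (vadd z0 (vscal r' x)) z0) with (vscal r' x) in Hc' by (veq z0 x x x).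
        rewrite vnorm_scal, Hr' in Hc'. fold N in Hc'.
        assert (E : r * N < d) by (unfold r; field_simplify; lra).
        specialize (Hc' E). apply Rabs_def2 in Hc'. lra. }
      assert (B1 := B r (Rabs_right r (Rgt_ge _ _ Hr))).
      assert (B2 := B (- r) ltac:(rewrite Rabs_Ropp; apply Rabs_right; lra)).
      assert (E : forall X, r * X < 1 -> X <= 2 / d * N).
      { intros X HX. unfold r in HX.
        assert (HX' : d * X < 2 * N).
        { apply (Rmult_lt_reg_r (/ (2 * N))). apply Rinv_0_lt_compat; lra.
          replace (2 * N * / (2 * N)) with 1 by (field; lra).
          replace (d * X * / (2 * N)) with (d / (2 * N) * X) by (field; lra). exact HX. }
        apply (Rmult_le_reg_l d); [exact Hd|].
        replace (d * (2 / d * N)) with (2 * N) by (field; lra). lra. }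
      apply Rabs_le. split.
      * assert (E2 := E (- xi x) ltac:(lra)). lra.
      * apply E; exact B1.
    + apply eq_sym, vnorm_eq0 in Hn. subst x.
      assert (E : xi vzero = 0).
      { apply (A_fun A gA vzero); [apply HA|apply (A_zero A gA maxA)]. }
      rewrite E, vnorm_0, Rabs_R0. lra.
  - intro y. pose proof (Hdom (vsub y z0)) as H. unfold hh in H.
    replace (vadd z0 (vsub y z0)) with y in H by (veq z0 y y y). lra.
Qed.
End Subgrad.


Section Line.
Variable Z : NormedSpace.
Variable g : Z -> R.
Hypothesis gc : continuous_fun g.
Hypothesis gv : convex_fun g.

Lemma line_bound x u K : (forall t, g (vadd x (vscal t u)) <= K) ->
  forall z, g (vadd z u) <= g z.
Proof.
  intros HK z. apply le_epsilon. intros e2 He2. set (eps := e2 / 2).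
  assert (He : 0 < eps) by (unfold eps; lra).
  replace e2 with (eps + eps) by (unfold eps; field).
  destruct (gc z eps He) as [d [Hd Hc]].
  set (D := vnorm (vsub z x)).
  assert (HD : 0 <= D) by apply vnorm_nonneg.
  set (C := Rabs (K - g z - eps)).
  assert (HC : 0 <= C) by apply Rabs_pos.
  set (lam := Rmin (1/2) (Rmin (d / (4 * (D + 1))) (eps / (C + 1)))).
  assert (Hl1 : lam <= 1/2) by apply Rmin_l.
  assert (Hl2 : lam <= d / (4 * (D + 1))) by (eapply Rle_trans; [apply Rmin_r|apply Rmin_l]).
  assert (Hl3 : lam <= eps / (C + 1)) by (eapply Rle_trans; [apply Rmin_r|apply Rmin_r]).
  assert (Hl0 : 0 < lam).
  { apply Rmin_glb_lt; [lra|]. apply Rmin_glb_lt; apply Rdiv_lt_0_compat; lra. }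
  assert (Hlne : lam <> 0) by lra.
  assert (Hl1ne : 1 - lam <> 0) by lra.
  set (w := vscal (1 / (1 - lam)) (vadd z (vscal (- lam) x))).
  assert (Ez : vadd z u = vadd (vscal lam (vadd x (vscal (1/lam) u))) (vscal (1 - lam) w))
    by (unfold w; veq z u x x).
  assert (Ew : vsub w z = vscal (lam / (1 - lam)) (vsub z x)) by (unfold w; veq z x x x).
  assert (Hw : Rabs (g w - g z) < eps).
  { apply Hc. rewrite Ew, vnorm_scal. fold D.
    rewrite Rabs_right by (apply Rle_ge, Rlt_le, Rdiv_lt_0_compat; lra).
    assert (E1 : lam / (1 - lam) <= 2 * lam).
    { apply (Rmult_le_reg_r (1 - lam)); [lra|].
      replace (lam / (1 - lam) * (1 - lam)) with lam by (field; lra). nra. }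
    assert (E2 : 2 * lam * D < d).
    { assert (E3 : lam * (4 * (D + 1)) <= d).
      { replace d with (d / (4 * (D + 1)) * (4 * (D + 1))) by (field; lra).
        apply Rmult_le_compat_r; lra. }
      nra. }
    nra. }
  apply Rabs_def2 in Hw.
  assert (Hcv := gv (vadd x (vscal (1/lam) u)) w lam ltac:(lra)).
  rewrite <- Ez in Hcv.
  assert (HK' := HK (1/lam)).
  assert (HlC : lam * C <= eps).
  { assert (E1 : lam * C <= eps / (C + 1) * C) by (apply Rmult_le_compat_r; lra).
    assert (E2 : eps / (C + 1) * C <= eps).
    { apply (Rmult_le_reg_r (C + 1)); [lra|].
      replace (eps / (C + 1) * C * (C + 1)) with (eps * C) by (field; lra). nra. }
    lra. }
  assert (HKC : K - g z - eps <= C) by apply Rle_abs.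
  assert (T1 : lam * g (vadd x (vscal (1 / lam) u)) <= lam * K) by (apply Rmult_le_compat_l; lra).
  assert (T2 : (1 - lam) * g w <= (1 - lam) * (g z + eps)) by (apply Rmult_le_compat_l; lra).
  assert (T3 : lam * (K - g z - eps) <= lam * C) by (apply Rmult_le_compat_l; lra).
  nra.
Qed.
End Line.


Section YG.
Variable Z : NormedSpace.
Variable g : Z -> R.
Hypothesis gc : continuous_fun g.
Hypothesis gv : convex_fun g.
Variable z0 : Z.
Hypothesis gmin : forall y, g z0 <= g y.

Definition Yg (v : Z) := forall t, g (vadd z0 (vscal t v)) = g z0.

Lemma Yg_scal a v : Yg v -> Yg (vscal a v).
Proof. intros H t. rewrite vscal_assoc. apply H. Qed.

Lemma Yg_closed : closed_subspace Yg.
Proof.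
  split; [|split; [|split]].
  - intro t. rewrite vscal_a0, vadd_0. reflexivity.
  - intros u v Hu Hv t. apply Rle_antisym; [|apply gmin].
    replace (vadd z0 (vscal t (vadd u v))) with
      (vadd (vscal (1/2) (vadd z0 (vscal (2*t) u))) (vscal (1 - 1/2) (vadd z0 (vscal (2*t) v))))
      by (veq z0 u v v).
    eapply Rle_trans; [apply gv; lra|]. rewrite Hu, Hv. lra.
  - apply Yg_scal.
  - intros u l Hu Hl t. apply Rle_antisym; [|apply gmin].
    apply le_epsilon. intros eps He.
    destruct (gc (vadd z0 (vscal t l)) eps He) as [d [Hd Hc]].
    destruct (Hl (d / (Rabs t + 1))) as [N HN].
    { apply Rdiv_lt_0_compat; [lra|]. pose proof (Rabs_pos t); lra. }
    specialize (HN N (le_n N)).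
    assert (H := Hc (vadd z0 (vscal t (u N)))).
    replace (vsub (vadd z0 (vscal t (u N))) (vadd z0 (vscal t l))) with (vscal t (vsub (u N) l)) in H
      by (veq z0 (u N) l l).
    rewrite vnorm_scal, Hu in H.
    assert (Hn0 := vnorm_nonneg _ (vsub (u N) l)).
    assert (Ht0 := Rabs_pos t).
    assert (E : Rabs t * vnorm (vsub (u N) l) < d).
    { assert (E1 : vnorm (vsub (u N) l) * (Rabs t + 1) < d).
      { replace d with (d / (Rabs t + 1) * (Rabs t + 1)) by (field; lra).
        apply Rmult_lt_compat_r; lra. }
      nra. }
    specialize (H E). apply Rabs_def2 in H. lra.
Qed.

Lemma Yg_inv z y : Yg y -> g (vadd z y) = g z.
Proof.
  intro Hy.
  assert (L : forall y', Yg y' -> forall z, g (vadd z y') <= g z).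
  { intros y' Hy'. apply (line_bound Z g gc gv z0 y' (g z0)). intro t. rewrite Hy'. lra. }
  apply Rle_antisym; [apply L; auto|].
  assert (H := L _ (Yg_scal (-1) y Hy) (vadd z y)).
  replace (vadd (vadd z y) (vscal (-1) y)) with z in H by (veq z y y y). exact H.
Qed.

Lemma Yg_nonconst x v : ~ Yg v -> ~ (exists k, forall t : R, g (vadd x (vscal t v)) = k).
Proof.
  intros Hn [k Hk]. apply Hn. intro t. apply Rle_antisym; [|apply gmin].
  apply (line_bound Z g gc gv x (vscal t v) k). intro s. rewrite vscal_assoc, Hk. lra.
Qed.
End YG.

Section MainS.
Variable Z : NormedSpace.
Variable f : Z -> R.
Hypothesis Hcont : continuous_fun f.
Hypothesis Hconv : convex_fun f.

Lemma uniq_lemma Y' z0 xi0 : closed_subspace Y' -> decomposes f Y' -> subdiff f z0 xi0 ->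
  forall v, Y' v <-> (forall t : R, f (vadd z0 (vscal t v)) - f z0 - xi0 (vscal t v) = 0).
Proof.
  intros [_ [_ [HYs _]]] [l [g [[l1 [l2 _]] [Hinv [_ [Hnc [[a [Ha1 _]] Hf]]]]]]] [[x1 [x2 _]] Hsub] v.
  assert (Hfl : forall t, f (vadd z0 (vscal t v)) = g (vadd z0 (vscal t v)) + l z0 + t * l v).
  { intro t. rewrite Hf, l1, l2. ring. }
  assert (Hsl : forall t, f (vadd z0 (vscal t v)) >= f z0 + t * xi0 v).
  { intro t. rewrite <- x2. replace (vscal t v) with (vsub (vadd z0 (vscal t v)) z0) at 2 by (veq z0 v v v).
    apply Hsub. }
  split.
  - intros Hv t. rewrite Hfl, (Hinv z0 _ (HYs t v Hv)), x2.
    assert (E : xi0 v = l v).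
    { pose proof (Hsl 1) as H1. pose proof (Hsl (-1)) as H2. rewrite !Hfl, !(Hinv z0 _ (HYs _ v Hv)), (Hf z0) in *. lra. }
    rewrite Hf, E. ring.
  - intros Hc. apply NNPP. intro Hn. apply (Hnc z0 v Hn). exists (g z0).
    assert (Hg : forall t, g (vadd z0 (vscal t v)) = g z0 + t * (xi0 v - l v)).
    { intro t. pose proof (Hc t) as H. rewrite Hfl, x2, (Hf z0) in H. lra. }
    assert (E : xi0 v - l v = 0).
    { destruct (Req_dec (xi0 v - l v) 0) as [E|E]; [exact E|exfalso].
      pose proof (Ha1 (vadd z0 (vscal ((a - g z0 - 1) / (xi0 v - l v)) v))) as H.
      rewrite Hg in H. field_simplify in H; [lra|exact E]. }
    intro t. rewrite Hg, E. ring.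
Qed.
End MainS.


Theorem mainTheorem2 (Z : NormedSpace) (HZ : complete Z) (f : Z -> R)
  (Hcont : continuous_fun f) (Hconv : convex_fun f) :
  exists Y : Z -> Prop,
    closed_subspace Y /\ decomposes f Y /\
    (forall Y' : Z -> Prop, closed_subspace Y' -> decomposes f Y' ->
       forall v, Y' v <-> Y v) /\
    (forall (z0 : Z) (xi0 : Z -> R), subdiff f z0 xi0 ->
       forall v, Y v <->
         (forall t : R, f (vadd z0 (vscal t v)) - f z0 - xi0 (vscal t v) = 0)).
Proof.
  destruct (subgrad_exists Z f Hcont Hconv vzero) as [xi Hxi].
  assert (Hxi' := Hxi). destruct Hxi' as [[x1 [x2 [M HM]]] Hsub].
  set (g := fun z => f z - xi z).
  assert (gc : continuous_fun g).
  { intros z eps He. destruct (Hcont z (eps/2) ltac:(lra)) as [d [Hd Hc]].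
    set (M' := Rabs M + 1).
    assert (HM' : 0 < M') by (unfold M'; pose proof (Rabs_pos M); lra).
    exists (Rmin d (eps / (2 * M'))). split.
    { apply Rmin_glb_lt; [lra|]. apply Rdiv_lt_0_compat; lra. }
    intros w Hw.
    assert (Hw1 : vnorm (vsub w z) < d) by (eapply Rlt_le_trans; [exact Hw|apply Rmin_l]).
    assert (Hw2 : vnorm (vsub w z) < eps / (2 * M')) by (eapply Rlt_le_trans; [exact Hw|apply Rmin_r]).
    specialize (Hc w Hw1).
    assert (Exi : xi w - xi z = xi (vsub w z)).
    { unfold vsub. rewrite x1, vopp_scal, x2. ring. }
    assert (Hb := HM (vsub w z)).
    assert (Hn := vnorm_nonneg _ (vsub w z)).
    assert (Hb2 : Rabs (xi (vsub w z)) < eps / 2).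
    { eapply Rle_lt_trans; [exact Hb|].
      assert (E1 : M <= M') by (unfold M'; pose proof (Rle_abs M); lra).
      assert (E2 : M * vnorm (vsub w z) <= M' * vnorm (vsub w z)) by (apply Rmult_le_compat_r; lra).
      assert (E3 : M' * vnorm (vsub w z) < M' * (eps / (2 * M'))) by (apply Rmult_lt_compat_l; lra).
      replace (M' * (eps / (2 * M'))) with (eps / 2) in E3 by (field; lra). lra. }
    unfold g. replace (f w - xi w - (f z - xi z)) with ((f w - f z) + - (xi w - xi z)) by ring.
    eapply Rle_lt_trans; [apply Rabs_triang|]. rewrite Rabs_Ropp, Exi. lra. }
  assert (gv : convex_fun g).
  { intros x y lam Hl. unfold g. rewrite x1, !x2. pose proof (Hconv x y lam Hl). lra. }
  assert (gmin : forall y, g vzero <= g y).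
  { intro y. unfold g. pose proof (Hsub y) as H. unfold vsub in H. rewrite x1, vopp_scal, x2 in H.
    pose proof (x2 0 vzero) as E. rewrite vscal_0 in E. rewrite E. lra. }
  assert (Hdec : decomposes f (Yg Z g vzero)).
  { exists xi, g. split; [exact (proj1 Hxi)|]. split.
    { intros z y Hy. apply (Yg_inv Z g gc gv vzero); auto. }
    split; [exact gv|]. split.
    { intros x v Hv. apply (Yg_nonconst Z g gc gv vzero gmin); auto. }
    split.
    - exists (g vzero). split; [exact gmin|]. exists vzero. reflexivity.
    - intro z. unfold g. ring. }
  assert (Hcl := Yg_closed Z g gc gv vzero gmin).
  exists (Yg Z g vzero). split; [exact Hcl|]. split; [exact Hdec|]. split.
  - intros Y' HY' HdY' v. rewrite (uniq_lemma Z f Y' vzero xi HY' HdY' Hxi v).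
    rewrite (uniq_lemma Z f _ vzero xi Hcl Hdec Hxi v). tauto.
  - intros z0 xi0 Hs v. apply (uniq_lemma Z f _ z0 xi0 Hcl Hdec Hs v).
Qed.
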